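(* Let $N>0$, $m>0$, $F>0$, $\alpha>0$, $w>0$ be fixed with $Nm>\alpha$, and for $g\geq 0$, $\tau\in(0,1)$, $L_g\geq 0$ define \[ L=\frac{N\left[(1-\tau)(mL_g+\alpha F)+(mg+F)mN\right]}{\alpha+(Nm-\alpha)\tau},\qquad p=\frac{L+L_g}{L+L_g-\alpha g}\left(mw+\frac{\alpha(1-\tau)w}{N}\right), \] regarded as functions of $(g,\tau,L_g)$. Then \[ \frac{\partial p}{\partial g}>0,\qquad \frac{\partial p}{\partial \tau}<0,\qquad \frac{\partial p}{\partial L_g}\leq 0 . \]
   Context: $L$ is equilibrium private employment and $p$ the equilibrium price of every variety in a monopolistic-competition general equilibrium model with a measure $N$ of firms, marginal and fixed labor inputs $m$ and $F$, CARA utility parameter $\alpha$, nominal wage $w$, income tax rate $\tau$, government purchase $g$ of each variety, and government employment $L_g$. Equivalently $p=mw(L+L_g)/(L+L_g-\alpha((L+L_g)q+g))$ with $q=(1-\tau)(L+L_g-\alpha g)/((Nm+\alpha(1-\tau))(L+L_g))$. Partial derivatives are taken in $(g,\tau,L_g)$ with other parameters fixed. *)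

(* Defs.v *)
From Stdlib Require Import Reals.
From Coquelicot Require Import Coquelicot.
Open Scope R_scope.

Definition Lemp (N m F alpha : R) (g tau Lg : R) : R :=
  N * ((1 - tau) * (m * Lg + alpha * F) + (m * g + F) * m * N)
    / (alpha + (N * m - alpha) * tau).

Definition price (N m F alpha w : R) (g tau Lg : R) : R :=
  let L := Lemp N m F alpha g tau Lg in
  (L + Lg) / (L + Lg - alpha * g) * (m * w + alpha * (1 - tau) * w / N).

(* Main.v *)
Require Import Defs.
From Stdlib Require Import Reals Lra Psatz.
From Coquelicot Require Import Coquelicot.
Open Scope R_scope.

Theorem theorem3 (N m F alpha w : R)
  (HN : 0 < N) (Hm : 0 < m) (HF : 0 < F) (Ha : 0 < alpha) (Hw : 0 < w)
  (HNm : N * m > alpha)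
  (g tau Lg : R) (Hg : 0 <= g) (Ht0 : 0 < tau) (Ht1 : tau < 1) (HLg : 0 <= Lg) :
  (ex_derive (fun g' => price N m F alpha w g' tau Lg) g /\
   Derive (fun g' => price N m F alpha w g' tau Lg) g > 0) /\
  (ex_derive (fun t' => price N m F alpha w g t' Lg) tau /\
   Derive (fun t' => price N m F alpha w g t' Lg) tau < 0) /\
  (ex_derive (fun l' => price N m F alpha w g tau l') Lg /\
   Derive (fun l' => price N m F alpha w g tau l') Lg <= 0).
Proof.
  set (K := N * m).
  set (u := 1 - tau).
  set (D := alpha + (N * m - alpha) * tau).
  set (P := (K + alpha*u)*(Lg+N*F) + (K*(K-alpha) + alpha*(K-alpha)*u)*g).
  set (C := m * w + alpha * (1 - tau) * w / N).
  assert (HD : 0 < D) by (unfold D; nra).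
  assert (Hu : 0 < u) by (unfold u; lra).
  assert (HK : K > alpha) by (unfold K; lra).
  assert (HP : 0 < P).
  { unfold P. assert (0 < K + alpha*u) by nra. assert (0 < Lg + N*F) by nra.
    assert (0 <= (K*(K-alpha) + alpha*(K-alpha)*u)*g).
    { apply Rmult_le_pos; [nra|lra]. }
    nra. }
  assert (HC : 0 < C).
  { unfold C. assert (0 < alpha * (1 - tau) * w / N).
    { apply Rdiv_lt_0_compat; [|lra]. apply Rmult_lt_0_compat; [nra|lra]. }
    nra. }
  assert (HDn : D <> 0) by lra.
  assert (HNn : N <> 0) by lra.
  assert (HPn : P <> 0) by lra.
  assert (HS : N * ((1 - tau) * (m * Lg + alpha * F) + (m * g + F) * m * N) / D
               + Lg - alpha * g = P / D).
  { unfold P, D, K, u. field. fold D. exact HDn. }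
  assert (HSn : N * ((1 - tau) * (m * Lg + alpha * F) + (m * g + F) * m * N) / D
               + Lg - alpha * g <> 0).
  { rewrite HS. apply Rgt_not_eq, Rdiv_lt_0_compat; lra. }
  split; [|split].
  - assert (Hd : is_derive (fun g' => price N m F alpha w g' tau Lg) g
       (C * alpha * (N*(u*(m*Lg+alpha*F) + F*m*N) + Lg*D) * D / P^2)).
    { unfold price, Lemp. cbv zeta. auto_derive.
      - fold D. unfold Rminus in HSn. exact HSn.
      - clear HS HSn. unfold P, D, u, K, C in *. field. repeat split; assumption. }
    split; [eexists; exact Hd|].
    assert (E : Derive (fun g' => price N m F alpha w g' tau Lg) g =
       C * alpha * (N*(u*(m*Lg+alpha*F) + F*m*N) + Lg*D) * D / P^2)
      by (apply is_derive_unique; exact Hd).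
    rewrite E.
    apply Rdiv_lt_0_compat; [| apply pow_lt; lra].
    assert (0 < N*(u*(m*Lg+alpha*F) + F*m*N) + Lg*D).
    { assert (0 < u*(m*Lg+alpha*F)) by (apply Rmult_lt_0_compat; nra).
      assert (0 < F*m*N) by (apply Rmult_lt_0_compat; nra).
      assert (0 <= Lg*D) by nra. nra. }
    repeat apply Rmult_lt_0_compat; lra.
  - assert (Hd : is_derive (fun t' => price N m F alpha w g t' Lg) tau
       (- (alpha*w*(K+alpha*u)*(Lg+N*F)) / (N*P))).
    { unfold price, Lemp. cbv zeta. auto_derive.
      - repeat split; try (fold D; exact HDn). unfold Rminus in HSn. exact HSn.
      - clear HS HSn. unfold P, D, u, K, C in *. field. repeat split; assumption. }
    split; [eexists; exact Hd|].
    assert (E : Derive (fun t' => price N m F alpha w g t' Lg) tau =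
       - (alpha*w*(K+alpha*u)*(Lg+N*F)) / (N*P))
      by (apply is_derive_unique; exact Hd).
    rewrite E.
    assert (0 < alpha*w*(K+alpha*u)*(Lg+N*F)).
    { repeat apply Rmult_lt_0_compat; nra. }
    assert (0 < N*P) by nra.
    unfold Rdiv. rewrite Ropp_mult_distr_l_reverse.
    apply Ropp_lt_gt_0_contravar, Rmult_lt_0_compat; [lra| apply Rinv_0_lt_compat; lra].
  - assert (Hd : is_derive (fun l' => price N m F alpha w g tau l') Lg
       (- (C*alpha*g*(D + N*u*m)*D) / P^2)).
    { unfold price, Lemp. cbv zeta. auto_derive.
      - fold D. unfold Rminus in HSn. exact HSn.
      - clear HS HSn. unfold P, D, u, K, C in *. field. repeat split; assumption. }
    split; [eexists; exact Hd|].
    assert (E : Derive (fun l' => price N m F alpha w g tau l') Lg =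
       - (C*alpha*g*(D + N*u*m)*D) / P^2)
      by (apply is_derive_unique; exact Hd).
    rewrite E.
    assert (0 <= C*alpha*g*(D + N*u*m)*D).
    { assert (0 < D + N*u*m) by (assert (0 < N*u*m) by (apply Rmult_lt_0_compat; nra); lra).
      repeat apply Rmult_le_pos; lra. }
    assert (0 < P^2) by (apply pow_lt; lra).
    unfold Rdiv. rewrite Ropp_mult_distr_l_reverse.
    assert (0 <= C*alpha*g*(D + N*u*m)*D * / P^2)
      by (apply Rmult_le_pos; [lra| apply Rlt_le, Rinv_0_lt_compat; lra]).
    lra.
Qed.
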